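(* If $\psi\in LFD$ is satisfiable (in some dependence model at some assignment) and $|V_\psi|=k$, then there is a dependence model $\mathbb{M}=(M,A)$ for the vocabulary $(V_\psi,\tau_\psi)$ such that $M$ is a $k$-tree of finite branching degree and $\mathbb{M},s\models\psi$ for some $s\in A$.
   Context: The language $LFD[V,\tau]$ is generated by $\varphi::=P\mathbf{x}\mid\neg\varphi\mid\varphi\wedge\varphi\mid\mathbb{D}_X\varphi\mid D_Xy$, with $X\subseteq V$ finite, $y\in V$, $P\in\tau$, $\mathbf{x}\in V^{ar(P)}$. $V_\psi$ is the set of variables occurring in $\psi$ and $\tau_\psi$ the set of predicates occurring in $\psi$. A dependence model is a pair $\mathbb{M}=(M,A)$ with $M$ a $\tau$-structure with domain $O$ and $A\subseteq O^V$. Semantics at $s\in A$: $s\models P\mathbf{x}$ iff $s(\mathbf{x})\in P^M$; Booleans as usual; $s\models\mathbb{D}_X\varphi$ iff $t\models\varphi$ for all $t\in A$ with $s\restriction X=t\restriction X$; $s\models D_Xy$ iff for all $t\in A$, $s\restriction X=t\restriction X$ implies $s(y)=t(y)$. A tuple $\mathbf{a}=(a_1,\dots,a_r)$ from $M$ is live if $M\models P\mathbf{a}$ for some $r$-ary $P\in\tau$. $M$ is a $k$-tree if there is a tree (acyclic connected graph) $T=(N,E)$ and a map $F$ assigning to each node a subset of the domain of $M$ of size at most $k$ such that (i) for every live tuple $\mathbf{a}$ there is a node $u$ with $\{a_1,\dots,a_r\}\subseteq F(u)$, and (ii) for every element $a$ the set $\{u\mid a\in F(u)\}$ is connected in $T$.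 $M$ has finite branching degree if $T$ can be chosen so that every node has finitely many neighbours. *)

(* Defs.v *)
From Stdlib Require Import List Relation_Operators.
From mathcomp Require Import all_boot.
Set Implicit Arguments.
Unset Strict Implicit.
Unset Printing Implicit Defensive.

Section LFD.
Variables (V : eqType) (Pred : eqType) (ar : Pred -> nat).

Inductive lfd : Type :=
  | Atom (P : Pred) (xs : (ar P).-tuple V)
  | Neg (f : lfd)
  | And (f g : lfd)
  | DBox (X : seq V) (f : lfd)
  | Dep (X : seq V) (y : V).

(** V_psi, as a sequence (possibly with repetitions). *)
Fixpoint vars (f : lfd) : seq V :=
  match f with
  | Atom _ xs => tval xs
  | Neg f => vars f
  | And f g => vars f ++ vars g
  | DBox X f => X ++ vars f
  | Dep X y => y :: X
  end.

Fixpoint preds (f : lfd) : seq Pred :=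
  match f with
  | Atom P _ => [:: P]
  | Neg f => preds f
  | And f g => preds f ++ preds g
  | DBox _ f => preds f
  | Dep _ _ => [::]
  end.

Definition interp (O : Type) := forall P : Pred, (ar P).-tuple O -> Prop.

Definition agree (O : Type) (X : seq V) (s t : V -> O) : Prop :=
  forall x, x \in X -> s x = t x.

Fixpoint sat (O : Type) (I : interp O) (A : (V -> O) -> Prop)
    (s : V -> O) (f : lfd) : Prop :=
  match f with
  | Atom P xs => I P [tuple of map s xs]
  | Neg f => ~ sat I A s f
  | And f g => sat I A s f /\ sat I A s g
  | DBox X f => forall t, A t -> agree X s t -> sat I A t f
  | Dep X y => forall t, A t -> agree X s t -> s y = t y
  end.

Definition satisfiable (f : lfd) : Prop :=
  exists (O : Type) (I : interp O) (A : (V -> O) -> Prop) (s : V -> O),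
    A s /\ sat I A s f.

End LFD.

Section Trees.
Variable N : Type.
Variable E : N -> N -> Prop.

Fixpoint epath (u : N) (l : list N) : Prop :=
  match l with
  | nil => True
  | v :: l' => E u v /\ epath v l'
  end.

Definition has_cycle : Prop :=
  exists (u : N) (l : list N),
    2 <= length l /\ NoDup (u :: l) /\ epath u l /\ E (List.last l u) u.

Definition is_tree : Prop :=
  inhabited N /\
  (forall u v, E u v -> E v u) /\
  (forall u, ~ E u u) /\
  (forall u v, clos_refl_trans N E u v) /\
  ~ has_cycle.

Definition finitely_branching : Prop :=
  forall u, exists l : list N, forall v, E u v -> In v l.

Definition connected_set (S : N -> Prop) : Prop :=
  forall u v, S u -> S v ->
    clos_refl_trans N (fun x y => E x y /\ S x /\ S y) u v.
End Trees.

Section KTree.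
Variables (Pred : eqType) (ar : Pred -> nat).

Definition size_le (O : Type) (B : O -> Prop) (k : nat) : Prop :=
  exists l : list O, (length l <= k)%nat /\ forall a, B a -> In a l.

Definition live (O : Type) (tau : seq Pred) (I : interp ar O)
    (r : nat) (a : r.-tuple O) : Prop :=
  exists P : Pred, exists e : ar P = r,
    P \in tau /\ I P (ecast n (n.-tuple O) (esym e) a).

Definition ktree_fb (O : Type) (tau : seq Pred) (I : interp ar O) (k : nat)
  : Prop :=
  exists (N : Type) (E : N -> N -> Prop) (F : N -> O -> Prop),
    is_tree E /\ finitely_branching E /\
    (forall u, size_le (F u) k) /\
    (forall r (a : r.-tuple O), live tau I a ->
       exists u, forall x, In x (tval a) -> F u x) /\
    (forall x : O, connected_set E (fun u => F u x)).
End KTree.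

(* Main.v *)
Require Import Defs.
From Stdlib Require Import List Relation_Operators ClassicalEpsilon Classical.
From mathcomp Require Import all_boot zify.
Set Implicit Arguments. Unset Strict Implicit.

Lemma In_mem (T : eqType) (x : T) (s : seq T) : x \in s -> In x s.
Proof. elim: s => //= y s IH; rewrite inE => /orP [/eqP ->|/IH]; auto. Qed.
Lemma mem_In (T : eqType) (x : T) (s : seq T) : In x s -> x \in s.
Proof. elim: s => //= y s IH [->|/IH H]; rewrite inE ?eqxx //; by rewrite H orbT. Qed.
Lemma NoDup_uniq (T : eqType) (s : seq T) : NoDup s -> uniq s.
Proof. elim: s => //= y s IH H; inversion H; subst; apply/andP; split; last by auto.
  apply/negP => /In_mem; auto. Qed.

Section Tr.
Variable X : Type.
Definition Et (u v : seq X) := (exists c, v = c :: u) \/ (exists c, u = c :: v).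

Lemma epath_nth (u : seq X) (l : seq (seq X)) : epath Et u l ->
  forall d i, i < size l -> Et (nth d (u :: l) i) (nth d (u :: l) i.+1).
Proof.
elim: l u => //= v l IH u [Huv Hp] d [|i] //= Hi.
exact: IH.
Qed.

Lemma last_nth (A : Type) (u : A) l : List.last l u = nth u (u :: l) (size l).
Proof. elim: l u => //= v l IH u. rewrite IH. by case: l IH. Qed.

Lemma argmax (g : nat -> nat) m : 0 < m -> exists i, i < m /\ forall j, j < m -> g j <= g i.
Proof.
elim: m => // m IH _. case: m IH => [|m] IH.
  by exists 0; split => // j; case: j.
have [i [Hi Hj]] := IH isT.
case: (leqP (g m.+1) (g i)) => H.
- exists i; split; first lia. move=> j Hj'. case: (ltnP j m.+1) => Hjm; first by auto.
  have -> : j = m.+1 by lia. done.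
- exists m.+1; split => // j Hj'. case: (ltnP j m.+1) => Hjm.
  + have := Hj j Hjm. lia.
  + have -> : j = m.+1 by lia. done.
Qed.
End Tr.

Lemma Et_acyclic (X : eqType) : ~ has_cycle (@Et X).
Proof.
move=> [u [l [Hl [Hnd [Hp Hc]]]]].
set C := u :: l. set m := size C.
have Hls : length l = size l by [].
have Hm : 3 <= m by rewrite /m /=; lia.
have Hu : uniq C by apply: NoDup_uniq.
pose x i := nth u C i.
pose nx i := if i == m.-1 then 0 else i.+1.
have Hedge : forall i, i < m -> Et (x i) (x (nx i)).
  move=> i Hi. rewrite /nx. case: eqP => Hi'.
  - rewrite /x Hi' /m /= -last_nth. exact: Hc.
  - rewrite /x. apply: epath_nth => //. rewrite /m /= in Hi Hi'. lia.
have Hm0 : 0 < m by lia.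
have [i [Hi Hmax]] := argmax (fun j => size (x j)) Hm0.
pose pv := if i == 0 then m.-1 else i.-1.
have Hpv : pv < m by rewrite /pv; case: eqP; lia.
have Hnpv : nx pv = i by rewrite /nx /pv; case: (i =P 0) => H; case: eqP => H'; lia.
have Hnx : nx i < m by rewrite /nx; case: eqP; lia.
have Hne : pv != nx i by rewrite /nx /pv; case: (i =P 0) => H; case: (i =P m.-1) => H'; apply/eqP; lia.
have E1 := Hedge pv Hpv. rewrite Hnpv in E1.
have E2 := Hedge i Hi.
have S1 := Hmax pv Hpv. have S2 := Hmax _ Hnx.
have e1 : x pv = behead (x i).
  case: E1 => [[c ->] //|[c Hc']]. rewrite Hc' /= in S1. lia.
have e2 : x (nx i) = behead (x i).
  case: E2 => [[c Hc']|[c ->] //]. rewrite Hc' /= in S2. lia.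
move: Hne. rewrite -(nth_uniq u Hpv Hnx Hu). by rewrite -/(x pv) -/(x (nx i)) e1 e2 eqxx.
Qed.

Lemma Et_sym (X : Type) (u v : seq X) : Et u v -> Et v u.
Proof. by case=> H; [right|left]. Qed.

Lemma Et_irrefl (X : Type) (u : seq X) : ~ Et u u.
Proof. by case=> [[c H]|[c H]]; have := congr1 size H => /=; lia. Qed.

Lemma rt_sym (T : Type) (R : T -> T -> Prop) : (forall a b, R a b -> R b a) ->
  forall a b, clos_refl_trans T R a b -> clos_refl_trans T R b a.
Proof.
move=> HR a b; elim => [x y /HR H|x|x y z _ H1 _ H2].
- exact: rt_step.
- exact: rt_refl.
- exact: rt_trans H2 H1.
Qed.

Lemma rt_root (X : Type) (u : seq X) : clos_refl_trans _ (@Et X) u [::].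
Proof.
elim: u => [|c u IH]; first exact: rt_refl.
apply: rt_trans IH. apply: rt_step. by right; exists c.
Qed.

Lemma Et_tree (X : eqType) : is_tree (@Et X).
Proof.
split; first exact: inhabits [::].
split; first exact: Et_sym.
split; first exact: Et_irrefl.
split; last exact: Et_acyclic.
move=> u v; apply: rt_trans (rt_root u) _. apply: rt_sym (rt_root v). exact: Et_sym.
Qed.

Lemma Et_fb (m : nat) : finitely_branching (@Et 'I_m).
Proof.
move=> u. exists ((if u is _ :: u' then [:: u'] else [::]) ++ map (fun c => c :: u) (enum 'I_m)).
move=> v [[c ->]|[c ->]].
- apply: In_mem; rewrite mem_cat; apply/orP; right. apply: map_f. by rewrite mem_enum.
- by apply: In_mem; rewrite mem_cat inE eqxx.
Qed.
Section Main.
Variables (V Pred : eqType) (ar : Pred -> nat) (psi : @lfd V Pred ar).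
Variables (O : Type) (I : interp ar O) (A : (V -> O) -> Prop) (s0 : V -> O).
Hypothesis HA0 : A s0.

Notation F := (@lfd V Pred ar).

Fixpoint subs (f : F) : seq F := f :: match f with
  | Neg g => subs g | And g h => subs g ++ subs h | DBox _ g => subs g | _ => [::] end.

Lemma sub_refl f : In f (subs f).
Proof. by case: f => /=; auto. Qed.

Lemma sub_trans g f h : In g (subs f) -> In f (subs h) -> In g (subs h).
Proof.
move=> Hg; elim: h => [P xs|h IH|h1 IH1 h2 IH2|X h IH|X y] /= [E|H]; try (subst f; exact Hg).
- by [].
- by right; apply: IH.
- by right; apply: in_or_app; case: (in_app_or _ _ _ H) => H'; [left; apply: IH1|right; apply: IH2].
- by right; apply: IH.
- by [].
Qed.

Lemma vars_sub f h : In f (subs h) -> {subset vars f <= vars h}.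
Proof.
elim: h => [P xs|h IH|h1 IH1 h2 IH2|X h IH|X y] /= [E|H] x hx; try (subst f; exact hx).
- by [].
- exact: IH H x hx.
- rewrite mem_cat; apply/orP; case: (in_app_or _ _ _ H) => H'; [left; exact: IH1 H' x hx|right; exact: IH2 H' x hx].
- rewrite mem_cat; apply/orP; right; exact: IH H x hx.
- by [].
Qed.

Lemma preds_sub f h : In f (subs h) -> {subset preds f <= preds h}.
Proof.
elim: h => [P xs|h IH|h1 IH1 h2 IH2|X h IH|X y] /= [E|H] x hx; try (subst f; exact hx).
- by [].
- exact: IH H x hx.
- rewrite mem_cat; apply/orP; case: (in_app_or _ _ _ H) => H'; [left; exact: IH1 H' x hx|right; exact: IH2 H' x hx].
- exact: IH H x hx.
- by [].
Qed.

Definition n := size (subs psi).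

Definition W (f : F) (s t : V -> O) : Prop :=
  match f with
  | DBox X g => agree X s t /\ ~ sat I A t g
  | Dep X y => agree X s t /\ s y <> t y
  | _ => True end.

Definition pick (s : V -> O) (c : 'I_n) : V -> O :=
  epsilon (inhabits s) (fun t => A t /\
    ((exists t', A t' /\ W (nth psi (subs psi) c) s t') -> W (nth psi (subs psi) c) s t)).

Lemma pick_spec s c : A s -> A (pick s c) /\
  ((exists t', A t' /\ W (nth psi (subs psi) c) s t') -> W (nth psi (subs psi) c) s (pick s c)).
Proof.
move=> As.
pose P := (fun t => A t /\
    ((exists t', A t' /\ W (nth psi (subs psi) c) s t') -> W (nth psi (subs psi) c) s t)).
change (P (pick s c)). rewrite /pick -/P. apply: epsilon_spec. rewrite /P.
case: (classic (exists t', A t' /\ W (nth psi (subs psi) c) s t')) => [[t [At Wt]]|H].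
- by exists t; split => // _.
- by exists s; split => // H'; case: H.
Qed.

Ltac emi := match goal with |- context [excluded_middle_informative ?P] => let H := fresh "Hemi" in destruct (excluded_middle_informative P) as [H|H]; cbn [is_left]; move: H end.

Fixpoint asg (u : seq 'I_n) : V -> O :=
  match u with [::] => s0 | c :: u' => pick (asg u') c end.

Lemma A_asg u : A (asg u).
Proof. elim: u => //= c u IH; exact: (pick_spec c IH).1. Qed.

Fixpoint val (u : seq 'I_n) (x : V) : seq 'I_n :=
  match u with
  | [::] => [::]
  | c :: u' => if excluded_middle_informative (asg (c :: u') x = asg u' x)
               then val u' x else c :: u'
  end.

Definition suf (q u : seq 'I_n) := exists r, u = r ++ q.

Lemma suf_refl u : suf u u. Proof. by exists [::]. Qed.
Lemma suf_nil u : suf [::] u. Proof. by exists u; rewrite cats0. Qed.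
Lemma suf_trans a b c : suf a b -> suf b c -> suf a c.
Proof. by move=> [r ->] [r' ->]; exists (r' ++ r); rewrite catA. Qed.
Lemma suf_size q u : suf q u -> size q <= size u.
Proof. by move=> [r ->]; rewrite size_cat leq_addl. Qed.
Lemma suf_cons q c w : suf q (c :: w) -> q = c :: w \/ suf q w.
Proof. by move=> [[|d r] /= H]; [left|right; exists r; case: H]. Qed.
Lemma suf_consr q c w : suf q w -> suf q (c :: w).
Proof. by move=> [r ->]; exists (c :: r). Qed.
Lemma suf_nil_r q : suf q [::] -> q = [::].
Proof. by move=> [[|d r] //=]; case: q. Qed.
Lemma suf_total a b u : suf a u -> suf b u -> size a <= size b -> suf a b.
Proof.
move=> [r1 E1] [r2 E2] Hs.
have Hr : size r2 <= size r1.
  have := congr1 size E1; have := congr1 size E2; rewrite !size_cat; lia.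
exists (drop (size r2) r1).
have := congr1 (drop (size r2)) E2. rewrite drop_size_cat // => <-.
rewrite E1 drop_cat. case: ltnP => H; first by [].
have -> : size r2 = size r1 by lia.
by rewrite subnn drop0 drop_size.
Qed.

Lemma val_suf u x : suf (val u x) u.
Proof.
elim: u => [|c u IH] /=; first exact: suf_refl.
emi => _; [exact: suf_consr|exact: suf_refl].
Qed.

Lemma val_asg u x : asg u x = asg (val u x) x.
Proof. elim: u => //= c u IH. emi => // ->; exact IH. Qed.

Lemma val_mid u x w : suf (val u x) w -> suf w u -> val w x = val u x.
Proof.
elim: u => [|c u IH] Hv Hw.
  by rewrite (suf_nil_r Hw).
case: (suf_cons Hw) => [-> //|Hw'].
move: Hv; rewrite /=; emi => _ Hv.
- exact: IH.
- have := suf_size Hv; have := suf_size Hw'; rewrite /=; lia.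
Qed.

Lemma asg_mid u x w : suf (val u x) w -> suf w u -> asg w x = asg u x.
Proof. move=> H1 H2; by rewrite val_asg (val_mid H1 H2) -val_asg. Qed.

Lemma val_const q y w : suf q w -> (forall z, suf q z -> suf z w -> asg z y = asg q y) ->
  val w y = val q y.
Proof.
elim: w => [|c w IH] Hq H.
  by rewrite (suf_nil_r Hq).
case: (suf_cons Hq) => [-> //|Hq'].
rewrite /=; emi => Heq.
- apply: IH => // z Hz1 Hz2; apply: H => //; exact: suf_consr.
- case: Heq. have E1 := H (c :: w) Hq (suf_refl _). have E2 := H w Hq' (suf_consr c (suf_refl _)).
  simpl in E1. by rewrite E1 E2.
Qed.

Lemma exq u (X : seq V) : exists q, suf q u /\ (q = [::] \/ exists x, x \in X /\ q = val u x)
  /\ forall x, x \in X -> suf (val u x) q.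
Proof.
elim: X => [|x X [q [Hq [Hq' Hq'']]]].
  by exists [::]; split; [exact: suf_nil|split; [left|]].
case: (leqP (size (val u x)) (size q)) => Hs.
- exists q; split => //; split.
  + case: Hq' => [->|[z [Hz ->]]]; first by left.
    by right; exists z; split => //; rewrite inE Hz orbT.
  + move=> z; rewrite inE => /orP [/eqP ->|Hz]; last exact: Hq''.
    exact: suf_total (val_suf _ _) Hq Hs.
- exists (val u x); split; first exact: val_suf. split.
  + by right; exists x; split => //; rewrite inE eqxx.
  + move=> z; rewrite inE => /orP [/eqP -> |/Hq'' H]; first exact: suf_refl.
    apply: suf_trans H _. apply: suf_total Hq (val_suf _ _) _. lia.
Qed.

Definition O' := option (seq 'I_n * V).
Definition sv (u : seq 'I_n) (x : V) : O' :=
  if x \in vars psi then Some (val u x, x) else None.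

Definition I' : interp ar O' := fun P a =>
  P \in preds psi /\ exists u (xs : (ar P).-tuple V),
    tval a = map (sv u) xs /\ {subset xs <= vars psi} /\ @I P [tuple of map (asg u) xs].

Definition A' (t : V -> O') := exists u, t = sv u.

Lemma sv_eq u g x : x \in vars psi -> sv u x = sv g x -> val u x = val g x.
Proof. by rewrite /sv => ->; case. Qed.

Lemma map_sv u u' (s s' : seq V) : {subset s <= vars psi} -> {subset s' <= vars psi} ->
  map (sv u) s = map (sv u') s' -> map (asg u) s = map (asg u') s'.
Proof.
move: s'; elim: s => [|x s IH] s'; case: s' => [|x' s'] //= H1 H2.
have hx : x \in vars psi by apply: H1; rewrite inE eqxx.
have hx' : x' \in vars psi by apply: H2; rewrite inE eqxx.
rewrite /sv hx hx' => [[E1 E2 E3]]. subst x'.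
rewrite val_asg E1 -val_asg; congr (_ :: _); apply: IH => //.
- by move=> z hz; apply: H1; rewrite inE hz orbT.
- by move=> z hz; apply: H2; rewrite inE hz orbT.
Qed.

Lemma agree_new X u g : {subset X <= vars psi} -> agree X (sv u) (sv g) -> agree X (asg u) (asg g).
Proof.
move=> HX Hag x hx. have := sv_eq (HX _ hx) (Hag _ hx) => E.
by rewrite val_asg E -val_asg.
Qed.

Lemma agree_child X u c : {subset X <= vars psi} -> agree X (asg u) (asg (c :: u)) ->
  agree X (sv u) (sv (c :: u)).
Proof.
move=> HX Hag x hx. rewrite /sv (HX _ hx) /=.
by emi => // H; case: H; rewrite (Hag _ hx).
Qed.

Lemma In_nth (f : F) : In f (subs psi) -> exists c : 'I_n, nth psi (subs psi) c = f.
Proof.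
rewrite /n; elim: (subs psi) => //= g l IH [<-|/IH [c Hc]].
- by exists (@Ordinal (size l).+1 0 isT).
- by exists (@Ordinal (size l).+1 c.+1 (ltn_ord c)).
Qed.

Lemma truth (f : F) : In f (subs psi) -> forall u,
  sat I' A' (sv u) f <-> sat I A (asg u) f.
Proof.
have Hv := vars_sub; have Hp := preds_sub.
elim: f => [P xs|g IH|g1 IH1 g2 IH2|X g IH|X y] Hin u /=.
- split.
  + case=> _ [u' [xs' [He [Hs HI]]]].
    have -> : [tuple of map (asg u) xs] = [tuple of map (asg u') xs'] => //.
    apply: val_inj => /=. apply: map_sv => //. exact: Hv Hin.
  + move=> HI; split; first by apply: (Hp _ _ Hin); rewrite /= inE eqxx.
    exists u, xs; split => //; split => //; exact: Hv Hin.
- have Hg : In g (subs psi) by apply: sub_trans Hin; rewrite /=; right; exact: sub_refl.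
  by rewrite IH.
- have Hg1 : In g1 (subs psi) by apply: sub_trans Hin; rewrite /=; right; apply: in_or_app; left; exact: sub_refl.
  have Hg2 : In g2 (subs psi) by apply: sub_trans Hin; rewrite /=; right; apply: in_or_app; right; exact: sub_refl.
  by rewrite IH1 // IH2.
- have Hg : In g (subs psi) by apply: sub_trans Hin; rewrite /=; right; exact: sub_refl.
  have HX : {subset X <= vars psi} by move=> x hx; apply: (Hv _ _ Hin); rewrite /= mem_cat hx.
  split.
  + move=> Hnew. apply: NNPP => Hold.
    have [t [At Wt]] : exists t, A t /\ W (DBox X g) (asg u) t.
      apply: NNPP => H; apply: Hold => t At Ag; apply: NNPP => Hn; apply: H; exists t; by split.
    have [c Hc] := In_nth Hin.
    have [_ Hw] := pick_spec c (A_asg u). rewrite Hc in Hw.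
    have [Ag Ns] := Hw (ex_intro _ t (conj At Wt)).
    apply: Ns. rewrite -/(asg (c :: u)) -IH //. apply: Hnew; first by exists (c :: u).
    exact: agree_child.
  + move=> Hold t [g' ->] Hag. rewrite IH //. apply: Hold; first exact: A_asg.
    exact: agree_new.
- have HX : {subset X <= vars psi} by move=> x hx; apply: (Hv _ _ Hin); rewrite /= inE hx orbT.
  have Hy : y \in vars psi by apply: (Hv _ _ Hin); rewrite /= inE eqxx.
  split.
  + move=> Hnew. apply: NNPP => Hold.
    have [t [At Wt]] : exists t, A t /\ W (@Dep V Pred ar X y) (asg u) t.
      apply: NNPP => H; apply: Hold => t At Ag; apply: NNPP => Hn; apply: H; exists t; by split.
    have [c Hc] := In_nth Hin.
    have [_ Hw] := pick_spec c (A_asg u). rewrite Hc in Hw.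
    have [Ag Ns] := Hw (ex_intro _ t (conj At Wt)).
    have E := sv_eq Hy (Hnew (sv (c :: u)) (ex_intro _ (c :: u) erefl) (agree_child HX Ag)).
    move: E; rewrite /=; emi => [H _|_ E].
    * exact: (Ns (esym H)).
    * have := suf_size (val_suf u y); rewrite E /=; lia.
  + move=> Hold t [g ->] Hag.
    have Hxv : forall x, x \in X -> val u x = val g x.
      by move=> x hx; apply: sv_eq (HX _ hx) (Hag _ hx).
    have [q [Hqu [Hq Hqx]]] := exq u X.
    have Hqg : suf q g.
      case: Hq => [->|[x [hx ->]]]; first exact: suf_nil.
      rewrite Hxv //; exact: val_suf.
    have Cu : forall z, suf q z -> suf z u -> asg z y = asg u y.
      move=> z H1 H2. symmetry; apply: Hold; first exact: A_asg.
      move=> x hx. symmetry. apply: asg_mid H2. exact: suf_trans (Hqx _ hx) H1.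
    have Cg : forall z, suf q z -> suf z g -> asg z y = asg u y.
      move=> z H1 H2. symmetry; apply: Hold; first exact: A_asg.
      move=> x hx. symmetry. rewrite (asg_mid (u := g) (x := x) _ H2).
        by rewrite val_asg -Hxv // -val_asg.
      rewrite -Hxv //. exact: suf_trans (Hqx _ hx) H1.
    have Hq0 : asg q y = asg u y by apply: Cu (suf_refl _) Hqu.
    have E1 : val u y = val q y.
      by apply: val_const Hqu _ => z H1 H2; rewrite Hq0; apply: Cu.
    have E2 : val g y = val q y.
      by apply: val_const Hqg _ => z H1 H2; rewrite Hq0; apply: Cg.
    by rewrite /sv Hy E1 E2.
Qed.


Definition Sx o w := exists x, x \in vars psi /\ o = sv w x.
Definition Rx o a b := Et a b /\ Sx o a /\ Sx o b.

Lemma chain o x u : x \in vars psi -> o = sv u x ->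
  forall r, suf (r ++ val u x) u -> clos_refl_trans _ (Rx o) (r ++ val u x) (val u x).
Proof.
move=> hx ho; elim => [|c r IH] Hs; first exact: rt_refl.
have Hs' : suf (r ++ val u x) u by apply: suf_trans Hs; exists [:: c].
apply: rt_trans (IH Hs'). apply: rt_step. split; first by right; exists c.
split; exists x; split => //; rewrite ho /sv hx; congr (Some (_, _)); symmetry; apply: val_mid => //.
- by exists (c :: r).
- by exists r.
Qed.

Lemma final k : sat I A s0 psi -> size (undup (vars psi)) = k ->
  exists (O0 : Type) (I0 : interp ar O0) (A0 : (V -> O0) -> Prop),
    (forall P, P \notin preds psi -> forall a, ~ I0 P a) /\
    (forall s t, A0 s -> A0 t -> forall x, x \notin vars psi -> s x = t x) /\
    ktree_fb (preds psi) I0 k /\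
    exists s, A0 s /\ sat I0 A0 s psi.
Proof.
move=> Hsat Hk. exists O', I', A'. split.
  by move=> P HP a [HP' _]; rewrite HP' in HP.
split.
  by move=> s t [u ->] [g ->] x hx; rewrite /sv (negbTE hx).
split; last first.
  exists (sv [::]); split; first by exists [::].
  by apply/(truth (sub_refl psi)).
exists (seq 'I_n), (@Et 'I_n), (fun u o => exists x, x \in vars psi /\ o = sv u x).
split; first exact: Et_tree.
split; first exact: Et_fb.
split.
  move=> u; exists (map (sv u) (undup (vars psi))); split.
    have Hl : length (map (sv u) (undup (vars psi))) = k by rewrite -Hk -(size_map (sv u)).
    rewrite Hl. by [].
  move=> o [x [hx ->]]. apply: In_mem. apply: map_f. by rewrite mem_undup.
split.
  move=> r a [P [e [_ HI]]]. subst r. case: HI => _ [u [xs [Ht [Hsub _]]]].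
  exists u => o Hin. have := mem_In Hin. rewrite /= in Ht. rewrite Ht => /mapP [x hx ->].
  by exists x; split => //; apply: Hsub.
move=> o u v [x [hx ho]] [x' [hx' ho']].
have E : sv u x = sv v x' by rewrite -ho -ho'.
move: (E); rewrite /sv hx hx' => [[E1 E2]]. subst x'.
have [r1 Hr1] := val_suf u x. have [r2 Hr2] := val_suf v x.
have C1 := chain hx ho (r := r1). rewrite -Hr1 in C1. have C1' := C1 (suf_refl _).
have C2 := chain hx' ho' (r := r2). rewrite -Hr2 in C2. have C2' := C2 (suf_refl _).
rewrite E1 in C1'.
apply: rt_trans C1' _. apply: rt_sym C2'.
by move=> a b [H1 [H2 H3]]; split; [exact: Et_sym|split].
Qed.

End Main.

Theorem corollary2p1 (V : eqType) (Pred : eqType) (ar : Pred -> nat)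
  (psi : @lfd V Pred ar) (k : nat) :
  satisfiable psi ->
  size (undup (vars psi)) = k ->
  exists (O : Type) (I : interp ar O) (A : (V -> O) -> Prop),
    (* M is a tau_psi-structure: predicates outside tau_psi are empty *)
    (forall P, P \notin preds psi -> forall a, ~ I P a) /\
    (* A is a set of assignments on V_psi: values outside V_psi are immaterial
       (all assignments coincide there) *)
    (forall s t, A s -> A t -> forall x, x \notin vars psi -> s x = t x) /\
    ktree_fb (preds psi) I k /\
    exists s, A s /\ sat I A s psi.
Proof.
move=> [O [I [A [s0 [HA0 Hsat]]]]] Hk.
exact: (@final V Pred ar psi O I A s0 HA0 k Hsat Hk).
Qed.
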